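(* Let $n\ge1$, $\nu\ge1$ be integers and $\delta\in\{0,1,2\}$. Then: (1) If $[\vec a]$ is a vertex of $\mathcal{O}^{(2\nu+\delta)}_{2^n}$, then $|\{[\vec b]\in\mathcal{V}(\mathcal{O}^{(2\nu+\delta)}_{2^n}):[\pi(\vec a)]=[\pi(\vec b)]\}|=2^{(n-1)(2\nu+\delta-2)}$. (2) $[\vec a]$ and $[\vec b]$ are adjacent vertices in $\mathcal{O}^{(2\nu+\delta)}_{2^n}$ if and only if $[\pi(\vec a)]$ and $[\pi(\vec b)]$ are adjacent vertices in $\mathcal{O}^{(2\nu+\delta)}_{2}$. (3) If $[\pi(\vec a)]$ and $[\pi(\vec b)]$ are adjacent vertices in $\mathcal{O}^{(2\nu+\delta)}_{2}$, then $[\vec a+\vec m_1]$ and $[\vec b+\vec m_2]$ are adjacent vertices in $\mathcal{O}^{(2\nu+\delta)}_{2^n}$ for all $\vec m_1,\vec m_2\in(2\mathbb{Z}_{2^n})^{2\nu+\delta}$ such that $(\vec a+\vec m_1)G_{2\nu+\delta,\Delta}(\vec a+\vec m_1)^t=(\vec b+\vec m_2)G_{2\nu+\delta,\Delta}(\vec b+\vec m_2)^t=0$.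
   Context: Let $V^{2\nu+\delta}$ be the set of tuples $\vec a=(a_1,\ldots,a_{2\nu+\delta})\in(\mathbb{Z}_{2^n})^{2\nu+\delta}$ such that some $a_i$ is a unit of $\mathbb{Z}_{2^n}$. Write $\vec a\sim\vec b$ if $\vec a=\lambda\vec b$ for some $\lambda\in\mathbb{Z}_{2^n}^\times$, let $[\vec a]$ denote the equivalence class and $V^{2\nu+\delta}_\sim$ the set of classes. Let $G_{2\nu+\delta,\Delta}=\begin{pmatrix}0&I_\nu&\\ &0&\\ &&\Delta\end{pmatrix}$ over $\mathbb{Z}_{2^n}$ (first two block sizes $\nu$, unspecified blocks zero), where $\Delta$ is empty if $\delta=0$, $\Delta=(1)$ if $\delta=1$, and $\Delta=\begin{pmatrix}z&1\\0&z\end{pmatrix}$ if $\delta=2$, with $z$ a fixed unit of $\mathbb{Z}_{2^n}$. The orthogonal graph $\mathcal{O}^{(2\nu+\delta)}_{2^n}$ has vertex set $\mathcal{V}(\mathcal{O}^{(2\nu+\delta)}_{2^n})=\{[\vec a]\in V^{2\nu+\delta}_\sim:\vec a\,G_{2\nu+\delta,\Delta}\,\vec a^t=0\}$, with $[\vec a]$ adjacent to $[\vec b]$ iff $\vec a(G_{2\nu+\delta,\Delta}+G_{2\nu+\delta,\Delta}^t)\vec b^t\in\mathbb{Z}_{2^n}^\times$. $\mathcal{O}^{(2\nu+\delta)}_{2}$ denotes the same construction with $n=1$ (using the reduction of $G_{2\nu+\delta,\Delta}$ mod $2$). $\pi:\mathbb{Z}_{2^n}\to\mathbb{Z}_2$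 is reduction mod $2$, applied componentwise to tuples. *)

(* Defs.v *)
From HB Require Import structures.
From mathcomp Require Import all_boot all_order all_algebra.
Set Implicit Arguments. Unset Strict Implicit. Unset Printing Implicit Defensive.
Import GRing.Theory.
Local Open Scope ring_scope.

(* The matrix G_{2nu+delta,Delta} over a commutative ring R, with parameter z:
   (0 I_nu ; 0 0) in the top-left 2nu x 2nu block, and Delta in the bottom
   right delta x delta block: Delta = () if delta = 0, (1) if delta = 1,
   ((z,1),(0,z)) if delta = 2. *)
Definition Gmat (R : comNzRingType) (nu delta : nat) (z : R) : 'M[R]_(2 * nu + delta) :=
  \matrix_(i, j)
    if ((i < nu)%N && (j == (i + nu)%N :> nat)) then 1
    else if (delta == 1%N) && (i == (2 * nu)%N :> nat) && (j == (2 * nu)%N :> nat) then 1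
    else if (delta == 2%N) then
      (if (i == (2 * nu)%N :> nat) && (j == (2 * nu)%N :> nat) then z
       else if (i == (2 * nu).+1%N :> nat) && (j == (2 * nu).+1%N :> nat) then z
       else if (i == (2 * nu)%N :> nat) && (j == (2 * nu).+1%N :> nat) then 1
       else 0)
    else 0.

Section Graph.
Variables (R : finComUnitRingType) (N : nat) (G : 'M[R]_N).

Definition primitive (a : 'rV[R]_N) : bool := [exists i, a 0 i \is a GRing.unit].

Definition cls (a : 'rV[R]_N) : {set 'rV[R]_N} :=
  [set b | [exists l : R, (l \is a GRing.unit) && (b == l *: a)]].

Definition qform (a : 'rV[R]_N) : R := (a *m G *m a^T) 0 0.
Definition bform (a b : 'rV[R]_N) : R := (a *m (G + G^T) *m b^T) 0 0.

Definition is_vertex (a : 'rV[R]_N) : bool := primitive a && (qform a == 0).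

Definition adj_vertices (a b : 'rV[R]_N) : bool :=
  [&& is_vertex a, is_vertex b & bform a b \is a GRing.unit].

Definition vertices : {set {set 'rV[R]_N}} := [set cls a | a in [pred a | is_vertex a]].

End Graph.

Definition pi2 (n : nat) (x : 'Z_(2 ^ n)) : 'Z_2 := (nat_of_ord x)%:R.
Definition piv (n N : nat) (a : 'rV['Z_(2 ^ n)]_N) : 'rV['Z_2]_N := map_mx (@pi2 n) a.

(* Main.v *)
Require Import Defs.
From HB Require Import structures.
From mathcomp Require Import all_boot all_order all_algebra.
From mathcomp Require Import zify ring.
Set Implicit Arguments. Unset Strict Implicit. Unset Printing Implicit Defensive.
Import GRing.Theory.
Local Open Scope ring_scope.

Lemma exp2_gt1 n : (1 < 2 ^ n.+1)%N.
Proof. by rewrite -[1%N](expn0 2) ltn_exp2l. Qed.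

Lemma dvd2_mod n : (2 %| (Zp_trunc (2 ^ n)).+2)%N.
Proof. case: n => [|n] //=. by rewrite Zp_cast ?exp2_gt1 // expnS dvdn_mulr. Qed.

Lemma pi2_nat n k : ((k %% (Zp_trunc (2 ^ n)).+2)%:R : 'Z_2) = k%:R.
Proof. apply: val_inj; rewrite /= !val_Zp_nat //. by rewrite modn_dvdm // dvd2_mod. Qed.


Lemma pi2_natr n k : pi2 (k%:R : 'Z_(2^n)) = k%:R.
Proof.
rewrite /pi2; have -> : nat_of_ord (k%:R : 'Z_(2^n)) = (k %% (Zp_trunc (2^n)).+2)%N by rewrite Zp_nat.
exact: pi2_nat. Qed.

Lemma pi2D n (x y : 'Z_(2^n)) : pi2 (x + y) = pi2 x + pi2 y.
Proof. by rewrite -[x]natr_Zp -[y]natr_Zp -natrD !pi2_natr natrD. Qed.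

Lemma pi2M n (x y : 'Z_(2^n)) : pi2 (x * y) = pi2 x * pi2 y.
Proof. by rewrite -[x]natr_Zp -[y]natr_Zp -natrM !pi2_natr natrM. Qed.

Lemma pi2_1 n : pi2 (1 : 'Z_(2^n)) = 1.
Proof. exact: (pi2_natr n 1). Qed.

Lemma pi2_zmod' n : zmod_morphism (@pi2 n).
Proof. move=> x y. apply: (addIr (pi2 y)). by rewrite -pi2D subrK addrNK. Qed.

HB.instance Definition _ n := GRing.isZmodMorphism.Build _ _ (@pi2 n) (@pi2_zmod' n).
HB.instance Definition _ n := GRing.isMonoidMorphism.Build _ _ (@pi2 n) (pi2_1 n, @pi2M n).



Lemma Z2_unit (y : 'Z_2) : (y \is a GRing.unit) = (y == 1).
Proof. by case: y => [[|[|]]]. Qed.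

Lemma Z2_cases (y : 'Z_2) : y = 0 \/ y = 1.
Proof. case: y => [[|[|//]]] ?; [left|right]; exact: val_inj. Qed.

Lemma pi2_unit n (x : 'Z_(2^n)) : (0 < n)%N -> (x \is a GRing.unit) = (pi2 x == 1).
Proof.
move=> n0. rewrite -[x in LHS]natr_Zp. rewrite unitZpE; last by case: n n0 x => // n _ _; apply: exp2_gt1.
rewrite coprime_pexpl // coprime2n /pi2.
apply/idP/eqP => [od|h].
- apply: val_inj; rewrite /= val_Zp_nat // modn2 od //.
- have := congr1 val h; rewrite /= val_Zp_nat // modn2. by case: (odd _).
Qed.

Section Forms.
Variables (R : finComUnitRingType) (N : nat) (G : 'M[R]_N).

Lemma trq (u v : 'rV[R]_N) : (u *m G^T *m v^T) 0 0 = (v *m G *m u^T) 0 0.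
Proof.
rewrite -[in RHS](trmxK (v *m G *m u^T)) [in RHS]mxE.
by rewrite !trmx_mul trmxK mulmxA. Qed.

Lemma qformD u v : qform G (u + v) = qform G u + qform G v + bform G u v.
Proof.
have addE (A B : 'M[R]_1) : (A + B) 0 0 = A 0 0 + B 0 0 by rewrite mxE.
rewrite /qform /bform linearD /= !mulmxDl !mulmxDr !mulmxDl !addE trq. ring.
Qed.

Lemma qformZ t u : qform G (t *: u) = t * t * qform G u.
Proof. by rewrite /qform linearZ /= -!scalemxAl -!scalemxAr !mxE mulrA. Qed.

Lemma bformZr t u v : bform G u (t *: v) = t * bform G u v.
Proof. by rewrite /bform linearZ /= -!scalemxAr mxE. Qed.

Lemma bformC u v : bform G u v = bform G v u.
Proof.
have addE (A B : 'M[R]_1) : (A + B) 0 0 = A 0 0 + B 0 0 by rewrite mxE.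
by rewrite /bform !mulmxDr !mulmxDl !addE !trq addrC. Qed.

End Forms.

Lemma qform_map (R S : finComUnitRingType) (f : {rmorphism R -> S}) N (G : 'M[R]_N) u :
  f (qform G u) = qform (map_mx f G) (map_mx f u).
Proof. by rewrite /qform map_trmx -!map_mxM [RHS]mxE. Qed.

Lemma bform_map (R S : finComUnitRingType) (f : {rmorphism R -> S}) N (G : 'M[R]_N) u v :
  f (bform G u v) = bform (map_mx f G) (map_mx f u) (map_mx f v).
Proof. by rewrite /bform !map_trmx -map_mxD -!map_mxM [RHS]mxE. Qed.

Lemma Gmat_pair (R : comNzRingType) nu delta (z : R) (i j : 'I_(2*nu+delta)) :
  (j < 2*nu)%N ->
  Gmat nu delta z i j + Gmat nu delta z j i =
  ((i : nat) == (if (j < nu)%N then j + nu else j - nu)%N)%:R.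
Proof.
move=> hj; rewrite !mxE.
have -> : (j == (2*nu)%N :> nat) = false by apply/eqP; lia.
have -> : (j == (2*nu).+1%N :> nat) = false by apply/eqP; lia.
rewrite !andbF !andFb /= !if_same.
case: (ltnP j nu) => hjn.
- have -> : (j == (i + nu)%N :> nat) = false by apply/eqP; lia.
  by rewrite andbF /= add0r; case: eqP.
- rewrite andFb addr0.
  have [e|ne] := eqVneq (i : nat) (j - nu)%N.
  + rewrite e. have -> : ((j-nu) < nu)%N by lia.
    have -> : (j == (j - nu + nu)%N :> nat) by apply/eqP; lia. by [].
  + case: ifP => // /andP [_ /eqP e2]. case/eqP: ne; lia.
Qed.

Lemma delta_form (R : comNzRingType) N (H : 'M[R]_N) (i j : 'I_N) :
  ((delta_mx (0 : 'I_1) i : 'rV[R]_N) *m H *m (delta_mx (0 : 'I_1) j : 'rV[R]_N)^T) 0 0 = H i j.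
Proof. by rewrite trmx_delta -rowE -colE !mxE. Qed.

Lemma col_form (R : comNzRingType) N (u : 'rV[R]_N) (H : 'M[R]_N) j :
  (u *m H *m (delta_mx (0 : 'I_1) j : 'rV[R]_N)^T) 0 0 = \sum_i u 0 i * H i j.
Proof. by rewrite trmx_delta -colE !mxE. Qed.

Definition partner nu (j : nat) : nat := if (j < nu)%N then (j + nu)%N else (j - nu)%N.

Lemma Gdiag (R : comNzRingType) nu delta (z : R) (j : 'I_(2*nu+delta)) :
  (j < 2*nu)%N -> Gmat nu delta z j j = 0.
Proof.
move=> hj; rewrite !mxE.
have -> : (j == (2*nu)%N :> nat) = false by apply/eqP; lia.
have -> : (j == (2*nu).+1%N :> nat) = false by apply/eqP; lia.
have -> : (j == (j + nu)%N :> nat) = false by apply/eqP; lia.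
by rewrite !andbF /= ?andFb /= ?if_same.
Qed.

Lemma addT (R : comNzRingType) N (M : 'M[R]_N) i j : (M + M^T) i j = M i j + M j i.
Proof. by rewrite !mxE. Qed.

Section Dec.
Variables (R : finComUnitRingType) (nu delta : nat) (z : R).
Local Notation N := (2 * nu + delta)%N.
Local Notation G := (Gmat nu delta z).
Definition ev (j : 'I_N) : 'rV[R]_N := delta_mx 0 j.

Lemma bform_ev (k k' : 'I_N) u : (k' < 2*nu)%N -> (k : nat) = partner nu k' ->
  bform G u (ev k') = u 0 k.
Proof.
move=> hk' hk; rewrite /bform /ev col_form (bigD1 k) //= big1 => [|i ik].
- by rewrite addT Gmat_pair // -/(partner nu k') -hk eqxx mulr1 addr0.
- rewrite addT Gmat_pair // -/(partner nu k') -hk.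
  by rewrite (_ : (i == k :> nat) = false) ?mulr0 //; apply/negbTE.
Qed.

Lemma Qdec (k k' : 'I_N) u t : (k' < 2*nu)%N -> (k : nat) = partner nu k' ->
  qform G (u + t *: ev k') = qform G u + t * u 0 k.
Proof.
move=> hk' hk; rewrite qformD qformZ bformZr (bform_ev _ hk' hk).
by rewrite /qform /ev delta_form Gdiag // mulr0 addr0.
Qed.
End Dec.

Lemma qform_sum (R : finComUnitRingType) N (H : 'M[R]_N) c :
  qform H c = \sum_j (\sum_i c 0 i * H i j) * c 0 j.
Proof. by rewrite /qform mxE; apply: eq_bigr => j _; rewrite !mxE. Qed.

Lemma qform_tail (R : finComUnitRingType) nu d (H : 'M[R]_(2*nu+d)) (c : 'rV[R]_(2*nu+d)) :
  (forall k : 'I_(2*nu+d), (k < 2*nu)%N -> c 0 k = 0) ->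
  qform H c = \sum_(j < d) (\sum_(i < d) c 0 (rshift _ i) * H (rshift _ i) (rshift _ j)) * c 0 (rshift _ j).
Proof.
move=> H0; rewrite qform_sum big_split_ord /= big1 ?Monoid.simpm => [|j _]; last first.
  by rewrite H0 ?mulr0 //= ltn_ord.
apply: eq_bigr => j _; rewrite big_split_ord big1 ?Monoid.simpm // => i _.
by rewrite H0 ?mul0r //= ltn_ord.
Qed.

Lemma exists_k nu delta (c : 'rV['Z_2]_(2*nu+delta)) : (delta <= 2)%N ->
  primitive c -> qform (Gmat nu delta 1) c = 0 ->
  exists k : 'I_(2*nu+delta), (k < 2*nu)%N && (c 0 k == 1).
Proof.
move=> hd /existsP [i0 ui0] hq.
case: delta c hd i0 ui0 hq => [|[|[|d]]] c // _ i0 ui0 hq.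
- exists i0; rewrite Z2_unit in ui0; rewrite ui0 andbT.
  by have := ltn_ord i0; lia.
- case: (boolP [exists k : 'I_(2*nu+1), (k < 2*nu)%N && (c 0 k == 1)]) => [/existsP //|/existsPn hn].
  exfalso.
  have H0 : forall k : 'I_(2*nu+1), (k < 2*nu)%N -> c 0 k = 0.
    move=> k hk; have := hn k; rewrite hk /=.
    by case: (Z2_cases (c 0 k)) => ->.
  move: hq; rewrite (qform_tail _ H0) !big_ord1 !mxE /= addn0 eqxx.
  have -> : (2*nu < nu)%N = false by lia.
  rewrite /= mulr1 => hq.
  have hr : c 0 (rshift (2*nu) ord0) = 0.
    by move: hq; case: (Z2_cases (c 0 (rshift (2*nu) ord0))) => ->.
  have : c 0 i0 = 0.
    case: (split_ordP i0) => j ->; first by rewrite H0 //= ltn_ord.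
    by rewrite (ord1 j).
  by move=> e; rewrite e unitr0 in ui0.
- case: (boolP [exists k : 'I_(2*nu+2), (k < 2*nu)%N && (c 0 k == 1)]) => [/existsP //|/existsPn hn].
  exfalso.
  have H0 : forall k : 'I_(2*nu+2), (k < 2*nu)%N -> c 0 k = 0.
    move=> k hk; have := hn k; rewrite hk /=.
    by case: (Z2_cases (c 0 k)) => ->.
  move: hq; rewrite (qform_tail _ H0) !big_ord_recl !big_ord0 !mxE /=.
  rewrite /bump /= addn0 addn1.
  have ha : (2*nu < nu)%N = false by lia.
  have hb : ((2*nu).+1 < nu)%N = false by lia.
  have hc : ((2*nu).+1 == 2*nu :> nat) = false by lia.
  have hd : (2*nu == (2*nu).+1 :> nat) = false by lia.
  rewrite ha hb hc hd !eqxx /= => hq.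
  have [h0 h1] : c 0 (rshift (2*nu) ord0) = 0 /\ c 0 (rshift (2*nu) (lift ord0 ord0)) = 0.
    move: hq; case: (Z2_cases (c 0 (rshift (2*nu) ord0))) => ->;
    case: (Z2_cases (c 0 (rshift (2*nu) (lift ord0 ord0)))) => -> // /eqP h; by vm_compute in h.
  have : c 0 i0 = 0.
    case: (split_ordP i0) => j ->; first by rewrite H0 //= ltn_ord.
    case: j => [[|[|//]]] hj.
    + by rewrite -h0; congr (c 0 _); apply: val_inj.
    + by rewrite -h1; congr (c 0 _); apply: val_inj.
  by move=> e; rewrite e unitr0 in ui0.
Qed.

Lemma card_Z2n n : (0 < n)%N -> #|'Z_(2^n)| = (2 ^ n)%N.
Proof. by case: n => // n _; rewrite card_ord Zp_cast // exp2_gt1. Qed.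

Lemma fiber_card n (e : 'Z_2) : (0 < n)%N ->
  #|[set x : 'Z_(2^n) | pi2 x == e]| = (2 ^ (n - 1))%N.
Proof.
move=> n0.
set A0 := [set x : 'Z_(2^n) | pi2 x == 0].
have hC : ~: A0 = [set x : 'Z_(2^n) | pi2 x == 1].
  apply/setP => x; rewrite !inE; by case: (Z2_cases (pi2 x)) => ->.
have hI : [set x : 'Z_(2^n) | pi2 x == 1] = [set x + 1 | x in A0].
  apply/setP => x; rewrite inE; apply/idP/imsetP.
  - move=> /eqP h; exists (x - 1); last by rewrite subrK.
    by rewrite inE rmorphB /= h rmorph1 subrr.
  - case=> y; rewrite inE => /eqP hy ->; by rewrite rmorphD /= hy rmorph1 add0r.
have hc : #|A0| = #|~: A0| by rewrite hC hI card_imset //; apply: addIr.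
have := cardsC A0; rewrite -hc card_Z2n // => h2.
have hA0 : #|A0| = (2 ^ (n - 1))%N.
  have e2 : (2^n = 2^(n-1) + 2^(n-1))%N by rewrite addnn -mul2n -expnS subn1 prednK.
  lia.
case: (Z2_cases e) => ->; first by [].
by rewrite -hC -hc.
Qed.

Lemma unit_card n : (0 < n)%N ->
  #|[set x : 'Z_(2^n) | x \is a GRing.unit]| = (2 ^ (n - 1))%N.
Proof.
move=> n0; rewrite -(fiber_card 1 n0); apply: eq_card => x; rewrite !inE.
exact: pi2_unit.
Qed.

Lemma G2E n nu delta (z : 'Z_(2^n)) : pi2 z = 1 ->
  map_mx (@pi2 n) (Gmat nu delta z) = Gmat nu delta 1.
Proof.
move=> hz; apply/matrixP => i j; rewrite !mxE.
by repeat case: ifP => _; rewrite ?rmorph0 ?rmorph1 ?hz.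
Qed.

Section Cls.
Variables (R : finComUnitRingType) (N : nat) (G : 'M[R]_N).

Lemma cls_refl (b : 'rV[R]_N) : b \in cls b.
Proof. by rewrite inE; apply/existsP; exists 1; rewrite unitr1 scale1r eqxx. Qed.

Lemma clsP (x b : 'rV[R]_N) : reflect (exists2 l, l \is a GRing.unit & x = l *: b) (x \in cls b).
Proof.
rewrite inE; apply: (iffP existsP) => [[l /andP [ul /eqP ->]]|[l ul ->]]; first by exists l.
by exists l; rewrite ul eqxx.
Qed.

Lemma cls_eq (x b : 'rV[R]_N) : x \in cls b -> cls x = cls b.
Proof.
case/clsP => l ul ->; apply/setP => y; apply/clsP/clsP => [[m um ->]|[m um ->]].
- by exists (m * l); rewrite ?unitrM ?um ?ul // scalerA.
- exists (m / l); first by rewrite unitrM um unitrV ul.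
  by rewrite scalerA mulrVK.
Qed.

Lemma vertexZ l b : l \is a GRing.unit -> is_vertex G b -> is_vertex G (l *: b).
Proof.
move=> ul /andP [/existsP [i ui] /eqP q]; apply/andP; split.
  by apply/existsP; exists i; rewrite mxE unitrM ul.
by rewrite qformZ q mulr0.
Qed.

Lemma cls_vertex x b : x \in cls b -> is_vertex G b -> is_vertex G x.
Proof. by case/clsP => l ul ->; apply: vertexZ. Qed.

Lemma card_cls (b : 'rV[R]_N) : primitive b ->
  #|cls b| = #|[set l : R | l \is a GRing.unit]|.
Proof.
case/existsP => i ui.
have -> : cls b = [set l *: b | l in [set l : R | l \is a GRing.unit]].
  apply/setP => x; apply/clsP/imsetP => [[l ul ->]|[l]]; first by exists l; rewrite ?inE.
  by rewrite inE => ul ->; exists l.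
apply: card_in_imset => l m _ _ /matrixP /(_ 0 i); rewrite !mxE.
exact: (mulIr ui).
Qed.
End Cls.

Lemma cls_Z2 N (u : 'rV['Z_2]_N) : cls u = [set u].
Proof.
apply/setP => x; apply/clsP/set1P => [[l ul ->]|->]; last by exists 1; rewrite ?unitr1 ?scale1r.
by move: ul; rewrite Z2_unit => /eqP ->; rewrite scale1r.
Qed.

Lemma partner_lt nu k : (k < 2 * nu)%N -> (partner nu k < 2 * nu)%N.
Proof. rewrite /partner; case: ifP => h; lia. Qed.

Lemma partner_inv nu k : (k < 2 * nu)%N -> partner nu (partner nu k) = k.
Proof.
rewrite /partner => h; case: (ltnP k nu) => h1.
- by rewrite ifF; [lia | apply/negbTE; rewrite -leqNgt; lia].
- by rewrite ifT; lia.
Qed.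

Lemma partner_neq nu k : (k < 2 * nu)%N -> partner nu k != k.
Proof. rewrite /partner => h; case: ifP => h1; apply/eqP; lia. Qed.

Section Part1.
Variables (n nu delta : nat) (z : 'Z_(2^n)).
Hypotheses (hn : (1 <= n)%N) (hnu : (1 <= nu)%N) (hd : (delta <= 2)%N) (hz : z \is a GRing.unit).
Local Notation N := (2*nu+delta)%N.
Local Notation R := ('Z_(2^n)).
Local Notation G := (Gmat nu delta z).
Local Notation M := (2^(n-1))%N.

Lemma pi2z : pi2 z = 1.
Proof. by apply/eqP; rewrite -pi2_unit. Qed.

Lemma piv_prim (a : 'rV[R]_N) : primitive a -> primitive (piv a).
Proof.
case/existsP => i ui; apply/existsP; exists i; rewrite mxE.
exact: rmorph_unit.
Qed.

Lemma piv_vertex (a : 'rV[R]_N) : is_vertex G a -> is_vertex (map_mx (@pi2 n) G) (piv a).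
Proof.
case/andP => pa /eqP qa; apply/andP; split; first exact: piv_prim.
by rewrite -qform_map qa rmorph0.
Qed.

Lemma unit_of_pi2 (x y : R) : pi2 x = pi2 y -> y \is a GRing.unit -> x \is a GRing.unit.
Proof. by rewrite !pi2_unit // => ->. Qed.

Lemma count_S (a : 'rV[R]_N) : is_vertex G a ->
  #|[set b | is_vertex G b && (piv b == piv a)]| = (M ^ (N - 1))%N.
Proof.
move=> ha.
have [k /andP [hk /eqP ak]] : exists k : 'I_N, (k < 2*nu)%N && (piv a 0 k == 1).
  apply: exists_k => //; first by case/andP: ha => pa _; exact: piv_prim.
  by rewrite -(G2E _ _ pi2z); case/andP: (piv_vertex ha) => _ /eqP.
rewrite mxE in ak.
have hk'N : (partner nu k < N)%N by have := partner_lt hk; lia.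
pose k' : 'I_N := Ordinal hk'N.
have hk'2 : (k' < 2 * nu)%N by exact: partner_lt.
have hkk : (k : nat) = partner nu k' by rewrite /= partner_inv.
have hne : (k == k') = false.
  apply/negbTE; apply/eqP => /(congr1 val) /= e.
  by move: (partner_neq hk); rewrite -e eqxx.
set S := [set b | is_vertex G b && (piv b == piv a)].
pose e := @ev R nu delta k'.
have evE : forall j, e 0 j = (j == k')%:R by move=> j; rewrite /e /ev mxE.
have cE : forall (b : 'rV[R]_N) t j, (b - t *: e) 0 j = b 0 j - t * (j == k')%:R.
  by move=> b t j; rewrite !mxE eqxx.
have decq : forall b : 'rV[R]_N, qform G b = qform G (b - b 0 k' *: e) + b 0 k' * b 0 k.
  move=> b; rewrite -{1}(subrK (b 0 k' *: e) b) (@Qdec R nu delta z k k') // cE hne mulr0 subr0 //.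
have ukS : forall b, b \in S -> b 0 k \is a GRing.unit.
  move=> b; rewrite inE => /andP [_ /eqP pb].
  rewrite pi2_unit //; have := congr1 (fun m : 'rV['Z_2]_N => m 0 k) pb; rewrite !mxE => ->; by rewrite ak.
pose F := fun j : 'I_N => (if j == k' then (fun x : R => x == a 0 k') else (fun x : R => pi2 x == pi2 (a 0 j))) : pred R.
pose psi (b : 'rV[R]_N) : {ffun 'I_N -> R} := [ffun j => if j == k' then a 0 k' else b 0 j].
have inj : {in S &, injective psi}.
  move=> b1 b2 S1 S2 /ffunP eqpsi.
  have u1 := ukS _ S1.
  move: S1 S2; rewrite !inE => /andP [/andP [_ /eqP q1] _] /andP [/andP [_ /eqP q2] _].
  have h1 := decq b1; have h2 := decq b2.
  set c1 := b1 - b1 0 k' *: e in h1 *; set c2 := b2 - b2 0 k' *: e in h2 *.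
  have ec : c1 = c2.
    apply/matrixP => i j; rewrite (ord1 i) !cE; have := eqpsi j; rewrite !ffunE.
    case: (eqVneq j k') => [->|ne] /=; first by rewrite !mulr1 !subrr.
    by rewrite !mulr0 !subr0.
  have bk : b1 0 k = b2 0 k.
    by have := congr1 (fun m : 'rV[R]_N => m 0 k) ec; rewrite !cE hne !mulr0 !subr0.
  have ek : b1 0 k' = b2 0 k'.
    apply: (mulIr u1); apply: (addrI (qform G c1)).
    by rewrite -h1 q1 bk ec -h2 q2.
  rewrite -(subrK (b1 0 k' *: e) b1) -(subrK (b2 0 k' *: e) b2) -/c1 -/c2 ec ek //.
have img : psi @: S = [set f | f \in family F].
  apply/setP => f; rewrite inE; apply/imsetP/idP.
  - case=> b; rewrite inE => /andP [_ /eqP pb] ->; apply/familyP => j; rewrite ffunE /F.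
    case: (eqVneq j k') => [_|ne]; first by rewrite unfold_in /=.
    rewrite unfold_in /=.
    by have := congr1 (fun m : 'rV['Z_2]_N => m 0 j) pb; rewrite !mxE => ->.
  - move=> /familyP hf.
    have hfj : forall j, j != k' -> pi2 (f j) = pi2 (a 0 j).
      by move=> j ne; have := hf j; rewrite /F (negbTE ne) unfold_in /= => /eqP.
    have hfk' : f k' = a 0 k' by have := hf k'; rewrite /F eqxx unfold_in /= => /eqP.
    pose c : 'rV[R]_N := \row_j (if j == k' then 0 else f j).
    have ck : c 0 k = f k by rewrite mxE hne.
    have fk : pi2 (f k) = 1 by rewrite hfj ?hne.
    have uck : c 0 k \is a GRing.unit by rewrite ck pi2_unit // fk.
    pose t := - qform G c / c 0 k.
    pose b := c + t *: e.
    have tc : t * c 0 k = - qform G c by rewrite /t divrK.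
    clearbody t.
    have qb : qform G b = 0 by rewrite /b (@Qdec R nu delta z k k') // tc subrr.
    have bE : forall j, b 0 j = if j == k' then t else f j.
      move=> j; rewrite /b !mxE eqxx /=.
      by case: (eqVneq j k') => _; rewrite ?mulr1 ?add0r ?mulr0 ?addr0.
    clearbody b.
    have pt : pi2 t = pi2 (a 0 k').
      have ha2 := decq a; case/andP: ha => _ /eqP qa; rewrite qa in ha2.
      set ca := a - a 0 k' *: e in ha2.
      have pvc : piv c = piv ca.
        apply/matrixP => i j; rewrite (ord1 i) mxE [RHS]mxE /ca cE [c 0 j]mxE.
        case: (eqVneq j k') => [->|ne]; first by rewrite mulr1 subrr.
        by rewrite mulr0 subr0 hfj.
      have qc : pi2 (qform G c) = pi2 (qform G ca) by rewrite !qform_map; move: pvc; rewrite /piv => ->.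
      have e1 : pi2 t * pi2 (c 0 k) = - pi2 (qform G c) by rewrite -rmorphM tc rmorphN.
      have hca : qform G ca = - (a 0 k' * a 0 k) by apply/eqP; rewrite -addr_eq0 -ha2.
      by rewrite ck fk mulr1 qc hca !rmorphN rmorphM /= opprK ak mulr1 in e1.
    exists b.
    + rewrite inE; apply/andP; split; first (apply/andP; split).
      * by apply/existsP; exists k; rewrite bE hne -ck.
      * by apply/eqP.
      * apply/eqP/matrixP => i j; rewrite (ord1 i) !mxE bE.
        by case: (eqVneq j k') => [->|ne] //; rewrite hfj.
    + by apply/ffunP => j; rewrite ffunE bE; case: (eqVneq j k') => [->|ne].
rewrite -(card_in_imset inj) img cardsE card_family foldrE big_map big_enum /=.
rewrite (bigD1 k') //= {1}/F eqxx.
have -> : #|(eq_op^~ (a 0 k')) : pred R| = 1%N.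
  by apply: (etrans _ (card1 (a 0 k'))); apply: eq_card => x.
rewrite mul1n (eq_bigr (fun _ => M)) => [|i ne]; last first.
  rewrite /F (negbTE ne) -(fiber_card (pi2 (a 0 i)) hn).
  by apply: eq_card => x; rewrite inE.
rewrite (eq_bigl (fun x => x \in predC1 k')) // prod_nat_const cardC1 card_ord.
by rewrite (subn1 (2*nu+delta)).
Qed.

Lemma pivZ (l : R) (b : 'rV[R]_N) : l \is a GRing.unit -> piv (l *: b) = piv b.
Proof. by move=> ul; rewrite /piv map_mxZ /=; move: ul; rewrite pi2_unit // => /eqP ->; rewrite scale1r. Qed.

Lemma part1 (a : 'rV[R]_N) : is_vertex G a ->
  #|[set C in vertices G | [exists b, (C == cls b) && (cls (piv b) == cls (piv a))]]|
   = (2 ^ ((n - 1) * (N - 2)))%N.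
Proof.
move=> ha.
have hc := count_S ha.
set S := [set b | is_vertex G b && (piv b == piv a)] in hc.
have -> : [set C in vertices G | [exists b, (C == cls b) && (cls (piv b) == cls (piv a))]]
          = [set cls b | b in S].
  apply/setP => C; rewrite inE; apply/andP/imsetP.
  - case=> /imsetP [b0 vb0 ->] /existsP [b /andP [/eqP eb ep]].
    exists b; last by [].
    rewrite inE; apply/andP; split.
      by apply: (cls_vertex (b := b0)); [rewrite eb; exact: cls_refl | rewrite inE in vb0].
    by rewrite !cls_Z2 in ep; apply/eqP/set1_inj/eqP.
  - case=> b; rewrite inE => /andP [vb /eqP pb] ->; split.
      by apply/imsetP; exists b.
    by apply/existsP; exists b; rewrite pb !eqxx.
have part : partition [set cls b | b in S] S.
  apply/and3P; split.
  - apply/eqP/setP => x; apply/bigcupP/idP.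
    + case=> C /imsetP [b Sb ->] xb; move: Sb; rewrite !inE => /andP [vb pb].
      apply/andP; split; first exact: (cls_vertex xb).
      by case/clsP: xb => l ul ->; rewrite pivZ.
    + move=> Sx; exists (cls x); last exact: cls_refl.
      by apply/imsetP; exists x.
  - apply/trivIsetP => A B /imsetP [b _ ->] /imsetP [b' _ ->] neq.
    rewrite disjoints_subset; apply/subsetP => x xb; rewrite inE; apply/negP => xb'.
    move/negP: neq; apply.
    by rewrite -(cls_eq xb) -(cls_eq xb').
  - apply/imsetP => [[b _ e]]; have := cls_refl b; by rewrite -e inE.
have uni : {in [set cls b | b in S], forall A : {set 'rV[R]_N}, #|A| = M}.
  move=> A /imsetP [b Sb ->]; rewrite card_cls ?unit_card //.
  by move: Sb; rewrite inE => /andP [/andP [pb _] _].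
have := card_uniform_partition uni part; rewrite hc => h.
have hN : (N - 1 = (N - 2) + 1)%N by lia.
rewrite hN expnD expn1 in h.
rewrite expnM; apply/eqP; rewrite -(eqn_pmul2r (m := M)) ?expn_gt0 //.
by rewrite -h.
Qed.
End Part1.

Theorem lemma2p2 (n nu delta : nat) (z : 'Z_(2 ^ n)) :
  (1 <= n)%N -> (1 <= nu)%N -> (delta <= 2)%N -> z \is a GRing.unit ->
  let G := Gmat nu delta z in
  let G2 := map_mx (@pi2 n) G in
  (* (1) *)
  (forall a : 'rV['Z_(2 ^ n)]_(2 * nu + delta),
     is_vertex G a ->
     #|[set C in vertices G |
          [exists b, (C == cls b) && (cls (piv b) == cls (piv a))]]|
       = (2 ^ ((n - 1) * (2 * nu + delta - 2)))%N) /\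
  (* (2) *)
  (forall a b : 'rV['Z_(2 ^ n)]_(2 * nu + delta),
     is_vertex G a -> is_vertex G b ->
     (adj_vertices G a b <-> adj_vertices G2 (piv a) (piv b))) /\
  (* (3) *)
  (forall a b : 'rV['Z_(2 ^ n)]_(2 * nu + delta),
     adj_vertices G2 (piv a) (piv b) ->
     forall m1 m2 : 'rV['Z_(2 ^ n)]_(2 * nu + delta),
       (exists c, m1 = 2%:R *: c) -> (exists c, m2 = 2%:R *: c) ->
       qform G (a + m1) = 0 -> qform G (b + m2) = 0 ->
       adj_vertices G (a + m1) (b + m2)).
Proof.
move=> hn hnu hd hz G G2.
have pm : forall (x c : 'rV['Z_(2 ^ n)]_(2 * nu + delta)),
    map_mx (@pi2 n) (x + 2%:R *: c) = map_mx (@pi2 n) x.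
  move=> x c; rewrite map_mxD map_mxZ rmorph_nat.
  by rewrite (_ : (2%:R : 'Z_2) = 0) ?scale0r ?addr0 //; apply: val_inj.
split; first by move=> a ha; apply: part1.
split.
- move=> a b va vb; split.
  + case/and3P => _ _ ub; apply/and3P; split; try exact: piv_vertex.
    by rewrite /G2 /piv -bform_map; apply: rmorph_unit.
  + case/and3P => _ _ ub; apply/and3P; split => //.
    by rewrite pi2_unit // -Z2_unit bform_map.
- move=> a b /and3P [va2 vb2 ub] m1 m2 [c1 ->] [c2 ->] q1 q2.
  have primL : forall (x c : 'rV['Z_(2 ^ n)]_(2 * nu + delta)),
      primitive (piv x) -> primitive (x + 2%:R *: c).
    move=> x c /existsP [i ui]; apply/existsP; exists i.
    rewrite pi2_unit //.
    have h := congr1 (fun m : 'rV['Z_2]_(2*nu+delta) => m 0 i) (pm x c).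
    rewrite /= !mxE in h; rewrite !mxE h.
    by rewrite mxE Z2_unit in ui.
  apply/and3P; split.
  + apply/andP; split; last by apply/eqP.
    by apply: primL; case/andP: va2.
  + apply/andP; split; last by apply/eqP.
    by apply: primL; case/andP: vb2.
  + by rewrite pi2_unit // -Z2_unit bform_map !pm.
Qed.
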